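(* For any ideal $\mathcal{I}$: (a) if $\mathcal{I}$ is a hereditary weak P-ideal then $\mathcal{I}$ is unboring, and if $\mathcal{I}$ is unboring then $\mathcal{I}$ is a weak P-ideal (equivalently: $\mathrm{Fin}^2\sqsubseteq\mathcal{I}\implies\mathcal{BI}\sqsubseteq\mathcal{I}\implies(\exists A\notin\mathcal{I})\ \mathrm{Fin}^2\sqsubseteq\mathcal{I}|A$); (b) neither of the two implications in (a) can be reversed in general (i.e., there is an unboring ideal which is not a hereditary weak P-ideal, and a weak P-ideal which is boring); (c) if $\mathcal{I}$ is contained in some unboring ideal then $\mathcal{I}$ is unboring; in particular, if $\mathcal{I}$ is contained in some hereditary weak P-ideal then $\mathcal{I}$ is unboring.
   Context: An ideal on an infinite countable set $X$ is a family $\mathcal{I}\subseteq\mathcal{P}(X)$ closed under subsets and finite unions, containing all finite subsets, with $X\notin\mathcal{I}$. $\mathcal{I}|A=\{B\cap A:B\in\mathcal{I}\}$. $\mathrm{Fin}^2$: ideal on $\omega^2$ of all $A$ with only finitely many $n$ such that $\{m:(n,m)\in A\}$ is infinite. $\mathcal{BI}$: ideal on $\omega^3$ of all $A$ for which there is $k$ with $\{(j,l):(i,j,l)\in A\}\in\mathrm{Fin}^2$ for $i<k$ and finite for $i\ge k$. $\mathcal{I}\sqsubseteq\mathcal{J}$: there is a bijection $f:\bigcup\mathcal{J}\to\bigcup\mathcal{I}$ with $f^{-1}[A]\in\mathcal{J}$ for all $A\in\mathcal{I}$. $\mathcal{I}$ is boring if $\mathcal{BI}\sqsubseteq\mathcal{I}$,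 unboring otherwise. $\mathcal{I}$ is a weak P-ideal if $\mathrm{Fin}^2\not\sqsubseteq\mathcal{I}$ (equivalently, every partition of $\bigcup\mathcal{I}$ into countably many sets from $\mathcal{I}$ admits $S\notin\mathcal{I}$ meeting each piece in a finite set), and a hereditary weak P-ideal if $\mathrm{Fin}^2\not\sqsubseteq\mathcal{I}|A$ for every $A\notin\mathcal{I}$. *)

(* Defs.v *)
From Stdlib Require Import List Arith.

Definition finite_set {X : Type} (A : X -> Prop) : Prop :=
  exists l : list X, forall x, A x -> In x l.

Definition countable_infinite (X : Type) : Prop :=
  (exists f : X -> nat, forall x y, f x = f y -> x = y) /\
  ~ finite_set (fun _ : X => True).

Definition is_ideal {X : Type} (I : (X -> Prop) -> Prop) : Prop :=
  (forall A B : X -> Prop, I B -> (forall x, A x -> B x) -> I A) /\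
  (forall A B : X -> Prop, I A -> I B -> I (fun x => A x \/ B x)) /\
  (forall A : X -> Prop, finite_set A -> I A) /\
  ~ I (fun _ => True).

Definition restrict {X : Type} (I : (X -> Prop) -> Prop) (A : X -> Prop)
  : ({x : X | A x} -> Prop) -> Prop :=
  fun C => exists B, I B /\ forall y : {x : X | A x}, C y <-> B (proj1_sig y).

Definition sqsub {X Y : Type} (I : (X -> Prop) -> Prop) (J : (Y -> Prop) -> Prop)
  : Prop :=
  exists (f : Y -> X) (g : X -> Y),
    (forall x, f (g x) = x) /\ (forall y, g (f y) = y) /\
    (forall A : X -> Prop, I A -> J (fun y => A (f y))).

Definition Fin2 (A : nat * nat -> Prop) : Prop :=
  finite_set (fun n => ~ finite_set (fun m => A (n, m))).

Definition BI (A : nat * nat * nat -> Prop) : Prop :=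
  exists k, forall i,
    (i < k -> Fin2 (fun p => A (i, fst p, snd p))) /\
    (k <= i -> finite_set (fun p => A (i, fst p, snd p))).

Definition boring {X : Type} (I : (X -> Prop) -> Prop) : Prop := sqsub BI I.
Definition unboring {X : Type} (I : (X -> Prop) -> Prop) : Prop := ~ boring I.

Definition weak_P {X : Type} (I : (X -> Prop) -> Prop) : Prop := ~ sqsub Fin2 I.

Definition hereditary_weak_P {X : Type} (I : (X -> Prop) -> Prop) : Prop :=
  forall A : X -> Prop, ~ I A -> ~ sqsub Fin2 (restrict I A).

(* Main.v *)
Require Import Defs.
From Stdlib Require Import List Arith Lia Classical ProofIrrelevance ClassicalEpsilon Cantor.
Import ListNotations.

Lemma fin_sub {X} (A B : X -> Prop) : finite_set B -> (forall x, A x -> B x) -> finite_set A.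
Proof. intros [l Hl] H. exists l. auto. Qed.

Lemma fin_union {X} (A B : X -> Prop) : finite_set A -> finite_set B ->
  finite_set (fun x => A x \/ B x).
Proof. intros [l1 H1] [l2 H2]. exists (l1 ++ l2). intros x [H|H]; apply in_or_app; auto. Qed.

Lemma fin_image {X Y} (A : X -> Prop) (B : Y -> Prop) (h : X -> Y) :
  finite_set A -> (forall y, B y -> exists x, A x /\ y = h x) -> finite_set B.
Proof.
  intros [l Hl] H. exists (map h l). intros y Hy. destruct (H y Hy) as [x [Ax ->]].
  apply in_map. auto.
Qed.

Lemma list_max_bound {X} (h : X -> nat) (l : list X) :
  forall p, In p l -> h p <= fold_right (fun p acc => max (h p) acc) 0 l.
Proof. induction l as [|a l IH]; simpl; intros p Hp; [contradiction|].
  destruct Hp as [<-|Hp]; [lia|]. specialize (IH p Hp). lia. Qed.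

Lemma fin_nat_bound (A : nat -> Prop) : finite_set A -> exists M, forall n, A n -> n <= M.
Proof. intros [l Hl]. exists (fold_right (fun p acc => max p acc) 0 l).
  intros n Hn. apply (list_max_bound (fun p => p)). auto. Qed.

Lemma nat_inf : ~ finite_set (fun _ : nat => True).
Proof. intro H. destruct (fin_nat_bound _ H) as [M HM]. specialize (HM (S M) I). lia. Qed.

Lemma fin_bounded (A : nat -> Prop) M : (forall n, A n -> n < M) -> finite_set A.
Proof. intros H. exists (seq 0 M). intros n Hn. apply in_seq. specialize (H n Hn). lia. Qed.

Lemma fin_Fin2 (A : nat * nat -> Prop) : finite_set A -> Fin2 A.
Proof.
  intros [l Hl]. exists nil. intros n Hn. apply Hn. exists (map snd l).
  intros m Hm. change m with (snd (n, m)). apply in_map. auto.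
Qed.

Lemma Fin2_sub (A B : nat * nat -> Prop) : Fin2 B -> (forall x, A x -> B x) -> Fin2 A.
Proof.
  intros HB H. apply (fin_sub _ _ HB). intros n Hn Hf. apply Hn.
  apply (fin_sub _ _ Hf). intros m Hm. apply H. exact Hm.
Qed.

Lemma Fin2_union (A B : nat * nat -> Prop) : Fin2 A -> Fin2 B -> Fin2 (fun x => A x \/ B x).
Proof.
  intros HA HB. apply (fin_sub _ _ (fin_union _ _ HA HB)). intros n Hn.
  apply NNPP. intro Hc. apply not_or_and in Hc. destruct Hc as [Ha Hb].
  apply NNPP in Ha. apply NNPP in Hb. apply Hn. exact (fin_union _ _ Ha Hb).
Qed.

Lemma not_Fin2_full : ~ Fin2 (fun _ : nat * nat => True).
Proof. intro H. apply nat_inf. apply (fin_sub _ _ H). intros n _ Hf. apply nat_inf. exact Hf. Qed.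

Lemma not_fin_full2 : ~ finite_set (fun _ : nat * nat => True).
Proof. intro H. apply not_Fin2_full. apply fin_Fin2. exact H. Qed.

Lemma sig_eq {X} (P : X -> Prop) (a b : sig P) : proj1_sig a = proj1_sig b -> a = b.
Proof. destruct a as [a Ha], b as [b Hb]; simpl; intros ->. f_equal. apply proof_irrelevance. Qed.

Lemma fin_bunion {X} k (S : nat -> X -> Prop) : (forall i, i < k -> finite_set (S i)) ->
  finite_set (fun x => exists i, i < k /\ S i x).
Proof.
  induction k as [|k IH]; intros H.
  - exists nil. intros x [i [Hi _]]. lia.
  - apply (fin_sub _ _ (fin_union _ _ (IH (fun i Hi => H i (Nat.lt_lt_succ_r _ _ Hi))) (H k (Nat.lt_succ_diag_r k)))).
    intros x [i [Hi Hs]]. destruct (Nat.eq_dec i k) as [->|Hne]; [right; auto|left].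
    exists i. split; [lia|auto].
Qed.
Arguments to_nat : simpl never.
Arguments of_nat : simpl never.
Lemma BI_sub (A B : nat*nat*nat -> Prop) : BI B -> (forall x, A x -> B x) -> BI A.
Proof.
  intros [k Hk] H. exists k. intros i. destruct (Hk i) as [H1 H2]. split; intros Hi.
  - apply (Fin2_sub _ _ (H1 Hi)). intros p. apply H.
  - apply (fin_sub _ _ (H2 Hi)). intros p. apply H.
Qed.

Lemma ideal_list_union {X} (I : (X -> Prop) -> Prop) (A : nat -> X -> Prop) :
  is_ideal I -> forall L, (forall n, In n L -> I (A n)) -> I (fun x => exists n, In n L /\ A n x).
Proof.
  intros [Hs [Hu [Hf _]]] L. induction L as [|a L IH]; intros H.
  - apply Hf. exists nil. intros x [n [[] _]].
  - apply (Hs _ _ (Hu _ _ (H a (or_introl eq_refl)) (IH (fun n Hn => H n (or_intror Hn))))).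
    intros x [n [[<-|Hn] Ha]]; [left; auto|right; eauto].
Qed.

Lemma partA1 (X : Type) (I : (X -> Prop) -> Prop) :
  is_ideal I -> hereditary_weak_P I -> unboring I.
Proof.
  intros Hid HW [f [g [fg [gf H]]]].
  destruct (classic (exists i, ~ I (fun x => fst (fst (f x)) = i))) as [[i Hi]|Hall].
  - apply (HW _ Hi).
    set (Ai := fun x => fst (fst (f x)) = i).
    assert (HG : forall p : nat*nat, Ai (g ((i, fst p), snd p))).
    { intros p. unfold Ai. rewrite fg. reflexivity. }
    exists (fun y : sig Ai => (snd (fst (f (proj1_sig y))), snd (f (proj1_sig y)))).
    exists (fun p => exist Ai (g ((i, fst p), snd p)) (HG p)).
    split; [|split].
    + intros [a b]. simpl. rewrite fg. reflexivity.
    + intros [x Hx]. apply sig_eq. simpl. unfold Ai in Hx.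
      destruct (f x) as [[a b] c] eqn:E. simpl in *. subst a. rewrite <- E. apply gf.
    + intros C HC. exists (fun x => fst (fst (f x)) = i /\ C (snd (fst (f x)), snd (f x))).
      split.
      * apply (H (fun y => fst (fst y) = i /\ C (snd (fst y), snd y))).
        exists (S i). intros i'. split; intros Hi'.
        -- apply (Fin2_sub _ C HC). intros [a b] [E Hc]. exact Hc.
        -- exists nil. intros p [E _]. simpl in E. lia.
      * intros [x Hx]. simpl. split; [intros Hc; split; auto|intros [_ Hc]; auto].
  - assert (Hall' : forall i, I (fun x => fst (fst (f x)) = i)).
    { intros i. apply NNPP. intro Hn. apply Hall. eauto. }
    pose proof Hid as Hid'. destruct Hid as [Hs [Hu [Hf Hfull]]].
    apply (HW (fun _ => True) Hfull).
    set (Ai := fun _ : X => True).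
    exists (fun y : sig Ai => (fst (fst (f (proj1_sig y))), to_nat (snd (fst (f (proj1_sig y))), snd (f (proj1_sig y))))).
    exists (fun p => exist Ai (g ((fst p, fst (of_nat (snd p))), snd (of_nat (snd p)))) Logic.I).
    split; [|split].
    + intros [a b]. simpl. rewrite fg. simpl. rewrite <- surjective_pairing. rewrite cancel_to_of. reflexivity.
    + intros [x Hx]. apply sig_eq. simpl. rewrite cancel_of_to. simpl.
      destruct (f x) as [[a b] c] eqn:E. simpl. rewrite <- E. apply gf.
    + intros C [L HL].
      exists (fun x => C (fst (fst (f x)), to_nat (snd (fst (f x)), snd (f x)))). split.
      2:{ intros [x Hx]. simpl. tauto. }
      set (B' := fun y : nat*nat*nat => C (fst (fst y), to_nat (snd (fst y), snd y)) /\ ~ In (fst (fst y)) L).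
      assert (HB' : BI B').
      { exists 0. intros i. split; intros Hi; [lia|].
        destruct (classic (In i L)) as [Hin|Hnin].
        - exists nil. intros p [_ Hn]. simpl in Hn. contradiction.
        - assert (Hc : finite_set (fun m => C (i, m))).
          { apply NNPP. intro Hc. apply Hnin. apply HL. exact Hc. }
          apply (fin_image _ _ of_nat Hc). intros [a b] [Hp _]. simpl in Hp.
          exists (to_nat (a, b)). split; [exact Hp|]. rewrite cancel_of_to. reflexivity. }
      apply (Hs _ _ (Hu _ _ (ideal_list_union I (fun n x => fst (fst (f x)) = n) Hid' L (fun n _ => Hall' n)) (H B' HB'))).
      intros x Hx. destruct (classic (In (fst (fst (f x))) L)) as [Hin|Hnin].
      * left. exists (fst (fst (f x))). auto.
      * right. unfold B'. auto.
Qed.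

Lemma partA2 (X : Type) (I : (X -> Prop) -> Prop) : unboring I -> weak_P I.
Proof.
  intros Hub [f [g [fg [gf H]]]]. apply Hub.
  exists (fun x => (of_nat (fst (f x)), snd (f x))).
  exists (fun y => g (to_nat (fst y), snd y)).
  split; [|split].
  - intros [a b]. simpl. rewrite fg. simpl. rewrite cancel_of_to. reflexivity.
  - intros x. simpl. rewrite cancel_to_of. destruct (f x) as [a b] eqn:E. simpl. rewrite <- E. apply gf.
  - intros B [k Hk]. apply (H (fun p => B (of_nat (fst p), snd p))).
    set (S := fun i (q : nat*nat) => fst q = i /\ ~ finite_set (fun l => B (i, snd q, l))).
    assert (HS : forall i, i < k -> finite_set (S i)).
    { intros i Hi. destruct (Hk i) as [H1 _]. specialize (H1 Hi).
      apply (fin_image _ _ (fun j => (i, j)) H1). intros [a b] [E Hb]. simpl in *. subst a.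
      exists b. split; [exact Hb|reflexivity]. }
    apply (fin_image _ _ to_nat (fin_bunion k S HS)).
    intros n Hn. simpl in Hn. destruct (of_nat n) as [i j] eqn:E.
    exists (i, j). split.
    + exists i. destruct (lt_dec i k) as [Hlt|Hge].
      * split; [exact Hlt|]. split; [reflexivity|]. exact Hn.
      * exfalso. destruct (Hk i) as [_ H2]. specialize (H2 ltac:(lia)). apply Hn.
        apply (fin_image _ _ snd H2). intros l Hl. exists (j, l). auto.
    + rewrite <- E. rewrite cancel_to_of. reflexivity.
Qed.
Lemma BI_ideal : is_ideal BI.
Proof.
  split; [|split; [|split]].
  - intros A B HB H. exact (BI_sub A B HB H).
  - intros A B [k1 H1] [k2 H2]. exists (max k1 k2). intros i.
    destruct (H1 i) as [H1a H1b], (H2 i) as [H2a H2b]. split; intros Hi.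
    + apply (Fin2_union (fun p => A (i, fst p, snd p)) (fun p => B (i, fst p, snd p))).
      * destruct (lt_dec i k1); [auto|apply fin_Fin2; apply H1b; lia].
      * destruct (lt_dec i k2); [auto|apply fin_Fin2; apply H2b; lia].
    + apply (fin_union (fun p => A (i, fst p, snd p)) (fun p => B (i, fst p, snd p))); [apply H1b|apply H2b]; lia.
  - intros A HA. exists 0. intros i. split; intros Hi; [lia|].
    apply (fin_image _ _ (fun y : nat*nat*nat => (snd (fst y), snd y)) HA).
    intros [a b] Hp. exists (i, a, b). auto.
  - intros [k Hk]. destruct (Hk k) as [_ H]. apply not_fin_full2. apply H. lia.
Qed.

Lemma cinf_nat3 : countable_infinite (nat*nat*nat).
Proof.
  split.
  - exists (fun x => to_nat (to_nat (fst x), snd x)). intros [[a b] c] [[a' b'] c'] E.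
    apply (f_equal of_nat) in E. rewrite !cancel_of_to in E. injection E as E1 E2.
    apply (f_equal of_nat) in E1. rewrite !cancel_of_to in E1. injection E1 as -> ->. subst. reflexivity.
  - intro H. apply nat_inf. apply (fin_image _ _ (fun x : nat*nat*nat => fst (fst x)) H).
    intros n _. exists (n, 0, 0). auto.
Qed.

Lemma BI_weakP : weak_P BI.
Proof.
  intros [f [g [fg [gf H]]]].
  assert (Hex : forall i m, exists x : nat*nat*nat, fst (fst x) = i /\ m < fst (f x)).
  { intros i m. apply NNPP. intro Hn.
    assert (Hb : forall p : nat*nat, fst (f (i, fst p, snd p)) <= m).
    { intros p. destruct (le_lt_dec (fst (f (i, fst p, snd p))) m) as [Hl|Hl]; [exact Hl|].
      exfalso. apply Hn. exists (i, fst p, snd p). auto. }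
    assert (HC : Fin2 (fun p => fst p <= m)).
    { apply (fin_bounded _ (S m)). intros n Hn'. destruct (le_lt_dec n m) as [Hl|Hl]; [lia|].
      exfalso. apply Hn'. exists nil. simpl. intros x Hx. lia. }
    destruct (H _ HC) as [k Hk]. destruct (Hk i) as [H1 H2].
    destruct (lt_dec i k) as [Hl|Hl].
    - apply not_Fin2_full. apply (Fin2_sub _ _ (H1 Hl)). intros p _. apply Hb.
    - apply not_fin_full2. apply (fin_sub _ _ (H2 ltac:(lia))). intros p _. apply Hb. }
  set (c := fun i m => proj1_sig (constructive_indefinite_description _ (Hex i m))).
  assert (Hc : forall i m, fst (fst (c i m)) = i /\ m < fst (f (c i m))).
  { intros i m. unfold c. destruct (constructive_indefinite_description _ (Hex i m)) as [x Hx]. exact Hx. }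
  set (S := fun x => exists i m, i <= m /\ x = c i m).
  assert (HC : Fin2 (fun p => S (g p))).
  { exists nil. intros n Hn. apply Hn. clear Hn.
    exists (flat_map (fun m => map (fun i => snd (f (c i m))) (seq 0 n)) (seq 0 n)).
    intros l [i [m [Him E]]]. apply in_flat_map. exists m.
    assert (Ef : f (c i m) = (n, l)) by (rewrite <- E; apply fg).
    destruct (Hc i m) as [_ Hm]. rewrite Ef in Hm. simpl in Hm.
    split; [apply in_seq; lia|]. apply in_map_iff. exists i. rewrite Ef. split; [reflexivity|].
    apply in_seq; lia. }
  destruct (H _ HC) as [k Hk]. destruct (Hk k) as [_ H2]. specialize (H2 (le_n k)).
  destruct H2 as [l Hl].
  set (M := k + fold_right (fun p acc => max (fst (f (k, fst p, snd p))) acc) 0 l).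
  destruct (Hc k M) as [E1 E2].
  destruct (c k M) as [[a b] d] eqn:E. simpl in E1. subst a.
  assert (Hin : In (b, d) l).
  { apply Hl. simpl. rewrite gf. exists k, M. split; [unfold M; lia|]. rewrite E. reflexivity. }
  pose proof (list_max_bound (fun p => fst (f (k, fst p, snd p))) l _ Hin) as Hm. simpl in Hm.
  unfold M in E2. lia.
Qed.

Lemma BI_boring : boring BI.
Proof. exists (fun x => x), (fun x => x). split; [|split]; auto. Qed.

Definition isW (x : nat + nat*nat) : Prop := match x with inl _ => True | inr _ => False end.
Definition isV (x : nat + nat*nat) : Prop := match x with inl _ => False | inr _ => True end.
Definition Iex (A : nat + nat*nat -> Prop) : Prop :=
  finite_set (fun n => A (inl n)) /\ Fin2 (fun p => A (inr p)).

Lemma Iex_ideal : is_ideal Iex.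
Proof.
  split; [|split; [|split]].
  - intros A B [H1 H2] H. split; [apply (fin_sub _ _ H1)|apply (Fin2_sub _ _ H2)]; intros x; apply H.
  - intros A B [H1 H2] [H3 H4]. split.
    + exact (fin_union _ _ H1 H3).
    + exact (Fin2_union _ _ H2 H4).
  - intros A HA. split.
    + apply (fin_image _ _ (fun x => match x with inl n => n | inr _ => 0 end) HA).
      intros n Hn. exists (inl n). auto.
    + apply fin_Fin2. apply (fin_image _ _ (fun x => match x with inl _ => (0,0) | inr p => p end) HA).
      intros p Hp. exists (inr p). auto.
  - intros [H _]. apply nat_inf. exact H.
Qed.

Lemma cinf_ex : countable_infinite (nat + nat*nat).
Proof.
  split.
  - exists (fun x => match x with inl n => to_nat (0, n) | inr p => to_nat (1, to_nat p) end).
    intros [a|a] [b|b] E; apply (f_equal of_nat) in E; rewrite !cancel_of_to in E;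
      try discriminate; injection E as E.
    + subst. reflexivity.
    + apply (f_equal of_nat) in E. rewrite !cancel_of_to in E. subst. reflexivity.
  - intro H. apply nat_inf. apply (fin_image _ _ (fun x => match x with inl n => n | inr _ => 0 end) H).
    intros n _. exists (inl n). auto.
Qed.

Lemma Iex_not_hwp : ~ hereditary_weak_P Iex.
Proof.
  intro HW. apply (HW isV).
  - intros [_ H]. apply not_Fin2_full. apply (Fin2_sub _ _ H). intros p _. exact Logic.I.
  - exists (fun y : sig isV => match proj1_sig y with inl _ => (0,0) | inr p => p end).
    exists (fun p => exist isV (inr p) Logic.I).
    split; [|split].
    + intros p. reflexivity.
    + intros [[n|p] Hx]; [destruct Hx|]. apply sig_eq. reflexivity.
    + intros C HC. exists (fun x => match x with inl _ => False | inr p => C p end). split.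
      * split; [exists nil; intros n []|]. exact HC.
      * intros [[n|p] Hx]; [destruct Hx|]. simpl. tauto.
Qed.

Lemma Iex_unboring : unboring Iex.
Proof.
  intros [f [g [fg [gf H]]]].
  assert (Step1 : forall i, finite_set (fun n => fst (fst (f (inl n))) = i)).
  { intros i. set (D := fun p : nat*nat => isW (g (i, fst p, snd p))).
    destruct (classic (Fin2 D)) as [HD|HD].
    - destruct (H (fun y => fst (fst y) = i /\ isW (g y))) as [Hfin _].
      + exists (S i). intros i'. split; intros Hi'.
        * apply (Fin2_sub _ _ HD). intros p [E Hp]. simpl in E. subst i'. exact Hp.
        * exists nil. intros p [E _]. simpl in E. lia.
      + apply (fin_sub _ _ Hfin). intros n Hn. split; [exact Hn|]. rewrite gf. exact Logic.I.
    - destruct (classic (exists j0, ~ finite_set (fun l => D (j0, l)))) as [[j0 Hj0]|Hno].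
      2:{ exfalso. apply HD. exists nil. intros n Hn. apply Hno. eauto. }
      destruct (H (fun y => fst (fst y) = i /\ snd (fst y) = j0 /\ isW (g y))) as [Hfin _].
      + exists (S i). intros i'. split; intros Hi'.
        * apply (fin_bounded _ (S j0)). intros n Hn.
          destruct (Nat.eq_dec n j0) as [->|Hne]; [lia|]. exfalso. apply Hn.
          exists nil. intros m [_ [E _]]. simpl in E. contradiction.
        * exists nil. intros p [E _]. simpl in E. lia.
      + exfalso. apply Hj0. destruct Hfin as [L HL].
        exists (map (fun n => snd (f (inl n))) L). intros l Hl. unfold D in Hl. simpl in Hl.
        destruct (g (i, j0, l)) as [n|p] eqn:E; [|destruct Hl].
        assert (Ef : f (inl n) = (i, j0, l)) by (rewrite <- E; apply fg).
        apply in_map_iff. exists n. rewrite Ef. split; [reflexivity|].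
        apply HL. rewrite Ef. simpl. split; [reflexivity|split; [reflexivity|]]. rewrite E. exact Logic.I. }
  destruct (H (fun y => isW (g y))) as [Hfin _].
  - exists 0. intros i. split; intros Hi; [lia|].
    apply (fin_image _ _ (fun n => (snd (fst (f (inl n))), snd (f (inl n)))) (Step1 i)).
    intros [a b] Hp. simpl in Hp. destruct (g (i, a, b)) as [n|p] eqn:E; [|destruct Hp].
    assert (Ef : f (inl n) = (i, a, b)) by (rewrite <- E; apply fg).
    exists n. rewrite Ef. auto.
  - apply nat_inf. apply (fin_sub _ _ Hfin). intros n _. rewrite gf. exact Logic.I.
Qed.

Theorem proposition4p10 :
  (* (a) *)
  (forall (X : Type) (I : (X -> Prop) -> Prop),
     countable_infinite X -> is_ideal I ->
     (hereditary_weak_P I -> unboring I) /\ (unboring I -> weak_P I)) /\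
  (* (b) *)
  ((exists (X : Type) (I : (X -> Prop) -> Prop),
      countable_infinite X /\ is_ideal I /\ unboring I /\ ~ hereditary_weak_P I) /\
   (exists (X : Type) (I : (X -> Prop) -> Prop),
      countable_infinite X /\ is_ideal I /\ weak_P I /\ boring I)) /\
  (* (c) *)
  (forall (X : Type) (I : (X -> Prop) -> Prop),
     countable_infinite X -> is_ideal I ->
     ((exists J : (X -> Prop) -> Prop,
         is_ideal J /\ (forall A, I A -> J A) /\ unboring J) -> unboring I) /\
     ((exists J : (X -> Prop) -> Prop,
         is_ideal J /\ (forall A, I A -> J A) /\ hereditary_weak_P J) -> unboring I)).
Proof.
  split; [|split].
  - intros X I _ Hid. split; [apply partA1; auto|apply partA2].
  - split.
    + exists (nat + nat*nat)%type, Iex. split; [exact cinf_ex|split; [exact Iex_ideal|split; [exact Iex_unboring|exact Iex_not_hwp]]].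
    + exists (nat*nat*nat)%type, BI. split; [exact cinf_nat3|split; [exact BI_ideal|split; [exact BI_weakP|exact BI_boring]]].
  - intros X I _ Hid.
    assert (Hc : forall J, (forall A, I A -> J A) -> unboring J -> unboring I).
    { intros J HIJ HJ [f [g [fg [gf H]]]]. apply HJ. exists f, g. split; [|split]; auto. }
    split.
    + intros [J [_ [HIJ HJ]]]. exact (Hc J HIJ HJ).
    + intros [J [HidJ [HIJ HJ]]]. exact (Hc J HIJ (partA1 X J HidJ HJ)).
Qed.
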